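(* Let $A\in\mathbb{R}^{n\times n}$, let $W\in\mathbb{R}^{n\times n}$ be symmetric positive definite, let $C=\mathrm{diag}(C_{11},\dots,C_{nn})$ be diagonal positive definite and $V=\mathrm{diag}(\sigma_1^2,\dots,\sigma_n^2)$ with $\sigma_j>0$. Let $\Sigma$ be the unique positive semidefinite solution of $\Sigma=A\Sigma A^T-A\Sigma C^T(C\Sigma C^T+V)^{-1}C\Sigma A^T+W$ and let $\overline\Sigma=\Sigma-\Sigma C^T(C\Sigma C^T+V)^{-1}C\Sigma=(C^TV^{-1}C+\Sigma^{-1})^{-1}$ be the a posteriori Kalman filter error covariance. Then $$n\ln\left(\frac{\sigma_u^2}{C_u^2+\sigma_u^2\lambda_n^{-1}(W)}\right)\le\ln\det\overline\Sigma\le n\ln\left(\frac{\sigma_l^2}{C_l^2}\right).$$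
   Context: $\lambda_n(\cdot)$ denotes the smallest eigenvalue. The indices $l,u$ are defined by $l=\arg\min_{1\le j\le n}C_{jj}^2/\sigma_j^2$ and $u=\arg\max_{1\le j\le n}C_{jj}^2/\sigma_j^2$, with $C_l:=C_{ll}$, $C_u:=C_{uu}$. *)

(* Defs.v *)
From HB Require Import structures.
From mathcomp Require Import all_boot all_order all_algebra.
From mathcomp Require Import all_classical all_reals all_analysis.
Set Implicit Arguments. Unset Strict Implicit. Unset Printing Implicit Defensive.
Import Order.TTheory GRing.Theory Num.Theory.
Local Open Scope ring_scope.

Section Defs.
Variable R : realType.

Definition psd_mx n (A : 'M[R]_n) : Prop :=
  A^T = A /\ forall x : 'cV[R]_n, 0 <= (x^T *m A *m x) ord0 ord0.

Definition pd_mx n (A : 'M[R]_n) : Prop :=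
  A^T = A /\ forall x : 'cV[R]_n, x != 0 -> 0 < (x^T *m A *m x) ord0 ord0.

Definition is_min_eigenvalue n (A : 'M[R]_n) (lam : R) : Prop :=
  eigenvalue A lam /\ forall mu, eigenvalue A mu -> lam <= mu.

Definition post_cov n (Sigma C V : 'M[R]_n) : 'M[R]_n :=
  Sigma - Sigma *m C^T *m invmx (C *m Sigma *m C^T + V) *m C *m Sigma.

Definition dare n (A W C V Sigma : 'M[R]_n) : Prop :=
  Sigma = A *m Sigma *m A^T
          - A *m Sigma *m C^T *m invmx (C *m Sigma *m C^T + V) *m C *m Sigma *m A^T
          + W.
End Defs.

(* Main.v *)
Require Import Defs.
From HB Require Import structures.
From mathcomp Require Import all_boot all_order all_algebra.
From mathcomp Require Import all_classical all_reals all_analysis.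
From mathcomp Require Import ring lra.
Import Order.TTheory GRing.Theory Num.Theory.
Set Implicit Arguments. Unset Strict Implicit. Unset Printing Implicit Defensive.
Local Open Scope ring_scope.

Section S.
Variable R : realType.

Definition qf n (M : 'M[R]_n) (x : 'cV[R]_n) := (x^T *m M *m x) ord0 ord0.
Definition n2 n (x : 'cV[R]_n) := (x^T *m x) ord0 ord0.

Lemma mx11M m (A : 'M[R]_(1, m)) (B : 'M[R]_(m, 1)) :
  (A *m B) ord0 ord0 = \sum_i A ord0 i * B i ord0.
Proof. by rewrite mxE. Qed.

Lemma n2E n (x : 'cV[R]_n) : n2 x = \sum_i x i ord0 ^+ 2.
Proof. by rewrite /n2 mxE; apply: eq_bigr => i _; rewrite mxE expr2. Qed.

Lemma n2_ge0 n (x : 'cV[R]_n) : 0 <= n2 x.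
Proof. by rewrite n2E sumr_ge0 // => i _; rewrite sqr_ge0. Qed.

End S.

Section S.
Variable R : realType.
Lemma mxBE m n (A B : 'M[R]_(m,n)) i j : (A - B) i j = A i j - B i j.
Proof. by rewrite !mxE. Qed.
Lemma mxDE m n (A B : 'M[R]_(m,n)) i j : (A + B) i j = A i j + B i j.
Proof. by rewrite !mxE. Qed.
Lemma mxZE m n (A : 'M[R]_(m,n)) c i j : (c *: A) i j = c * A i j.
Proof. by rewrite !mxE. Qed.
Lemma qf_block n (a : R) (b : 'cV[R]_n) Q (t : R) y :
  qf (block_mx a%:M b^T b Q : 'M[R]_(1 + n)) (col_mx t%:M y) =
  a * t ^+ 2 + 2 * t * (b^T *m y) ord0 ord0 + qf Q y.
Proof.
rewrite /qf tr_col_mx mul_row_block mul_row_col tr_scalar_mx.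
rewrite !mulmxDl !mul_mx_scalar !mul_scalar_mx -scalemxAl !mxE.
have -> : \sum_j y^T ord0 j * b j ord0 = \sum_j b^T ord0 j * y j ord0.
  by apply: eq_bigr => j _; rewrite !mxE mulrC.
rewrite eqxx /=; ring.
Qed.

Lemma n2_col n (t : R) (y : 'cV[R]_n) : n2 (col_mx t%:M y : 'cV[R]_(1 + n)) = t ^+ 2 + n2 y.
Proof.
rewrite /n2 tr_col_mx mul_row_col tr_scalar_mx mul_scalar_mx !mxE /=.
by rewrite mulr1n expr2.
Qed.

Lemma det_step n (m M : R) :
  (forall (P : 'M[R]_n), P^T = P ->
  (forall x, m * n2 x <= qf P x) -> (forall x, qf P x <= M * n2 x) ->
  m ^+ n <= \det P <= M ^+ n) ->
  forall (P : 'M[R]_(1 + n)), 0 < m -> P^T = P ->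
  (forall x, m * n2 x <= qf P x) -> (forall x, qf P x <= M * n2 x) ->
  m ^+ (1 + n) <= \det P <= M ^+ (1 + n).
Proof.
move=> IH P m0 sP lo hi.
rewrite -[P]submxK in sP lo hi *.
set a := ulsubmx P ord0 ord0.
set b := dlsubmx P.
set Q := drsubmx P.
have ea : ulsubmx P = a%:M by rewrite [LHS]mx11_scalar.
move: sP; rewrite tr_block_mx => /eq_block_mx [_ eu _ eQ].
rewrite -eu ea -/Q in lo hi *.
rewrite -/b in lo hi *.
rewrite -/Q in eQ.
move: a b Q eu eQ ea lo hi => a b Q _ eQ _ lo hi.
have sym1 : forall y : 'cV[R]_n, (y^T *m b) ord0 ord0 = (b^T *m y) ord0 ord0.
  by move=> y; rewrite -[y^T *m b]trmxK trmx_mul trmxK mxE.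
have qf0 : qf Q 0 = 0 by rewrite /qf trmx0 !mul0mx mxE.
have ha : m <= a <= M.
  have := lo (col_mx 1%:M 0); have := hi (col_mx 1%:M 0).
  rewrite !qf_block n2_col qf0 mulmx0 !mxE /n2 trmx0 mul0mx mxE expr1n !mulr1 !addr0.
  by rewrite !mulr0 !addr0 !mulr1 => h1 h2; rewrite h1 h2.
have a0 : 0 < a by case/andP: ha => h _; exact: lt_le_trans m0 h.
set S := Q - a^-1 *: (b *m b^T).
have qS : forall y, qf S y = qf Q y - a^-1 * (b^T *m y) ord0 ord0 ^+ 2.
  move=> y; rewrite /qf /S mulmxBr mulmxBl -scalemxAr -scalemxAl.
  rewrite mxBE mxZE.
  congr (_ - _ * _); rewrite (mulmxA y^T b) -(mulmxA (y^T *m b)) mxE big_ord1 sym1 expr2.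
  by [].
have sS : S^T = S.
  by rewrite /S linearB /= linearZ /= trmx_mul trmxK eQ.
have dP : \det (block_mx a%:M b^T b Q) = a * \det S.
  have -> : block_mx a%:M b^T b Q =
     block_mx 1%:M 0 (a^-1 *: b) 1%:M *m block_mx a%:M b^T 0 S.
    rewrite mulmx_block !mul1mx !mul0mx ?mulmx0 !addr0 ?add0r mul_mx_scalar.
    rewrite scalerA mulfV ?gt_eqF // scale1r -scalemxAl /S addrC subrK.
    by [].
  by rewrite det_mulmx det_lblock det_ublock !det1 det_scalar1 !mul1r.
have loS : forall y, m * n2 y <= qf S y.
  move=> y; set s := (b^T *m y) ord0 ord0.
  have := lo (col_mx (- (s / a))%:M y); rewrite qf_block n2_col qS -/s.
  have -> : a * (- (s / a)) ^+ 2 + 2 * - (s / a) * s + qf Q y = qf Q y - a^-1 * s ^+ 2.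
    by field; rewrite gt_eqF.
  apply: le_trans; rewrite ler_pM2l // lerDr sqr_ge0 //.
have hiS : forall y, qf S y <= M * n2 y.
  move=> y; rewrite qS; apply: (@le_trans _ _ (qf Q y)).
    by rewrite gerBl mulr_ge0 ?invr_ge0 ?sqr_ge0 ?ltW.
  have := hi (col_mx 0%:M y); rewrite qf_block n2_col.
  by rewrite !expr0n /= !mulr0 !mul0r !add0r.
have /andP [h1 h2] := IH S sS loS hiS.
rewrite dP !exprS; case/andP: ha => ha1 ha2; apply/andP; split.
  by apply: ler_pM => //; [exact: ltW | rewrite exprn_ge0 // ltW].
apply: ler_pM => //; [exact: ltW | apply: le_trans h1; rewrite exprn_ge0 // ltW //].
Qed.


Lemma det_bounds n (P : 'M[R]_n) (m M : R) : 0 < m -> P^T = P ->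
  (forall x, m * n2 x <= qf P x) -> (forall x, qf P x <= M * n2 x) ->
  m ^+ n <= \det P <= M ^+ n.
Proof.
elim: n P => [|n IH] P m0 sP lo hi.
  by rewrite det_mx00 !expr0 lexx.
exact: (det_step (fun P => IH P m0) m0 sP lo hi).
Qed.
End S.
Module M2.
Import numFieldNormedType.Exports.
Local Open Scope classical_set_scope.
Section S.
Variable R : realType.

Lemma cont_sum (T : topologicalType) k (F : 'I_k -> T -> R) :
  (forall i, continuous (F i)) -> continuous (fun z => \sum_i F i z).
Proof.
move=> hF; have -> : (fun z => \sum_i F i z) = \sum_i F i by rewrite fct_sumE.
elim/big_ind: _ => //; first exact: cst_continuous.
move=> f g cf cg x; exact: (@continuousD _ _ _ f g x (cf x) (cg x)).
Qed.

Lemma quad_cont n (B : 'M[R]_n) :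
  continuous (fun z : 'rV[R]_n => (z *m B *m z^T) ord0 ord0).
Proof.
have -> : (fun z : 'rV[R]_n => (z *m B *m z^T) ord0 ord0) =
   (fun z => \sum_j (\sum_i z ord0 i * B i j) * z ord0 j).
  by apply/funext => z; rewrite !mxE; apply: eq_bigr => j _; rewrite !mxE.
apply: cont_sum => j z.
have h1 : continuous (fun z : 'rV[R]_n => \sum_i z ord0 i * B i j).
  apply: (@cont_sum _ _ (fun i (z : 'rV[R]_n) => z ord0 i * B i j)) => i y.
  apply: continuousM; [exact: coord_continuous | exact: cst_continuous].
exact: (@continuousM _ _ _ (fun z : 'rV[R]_n => z ord0 j) z (h1 z)
     (@coord_continuous _ _ _ _ _ z)).
Qed.

Lemma sq_le_sum k (F : 'I_k -> R) j : F j ^+ 2 <= \sum_i F i ^+ 2.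
Proof. by rewrite (bigD1 j) //= lerDl sumr_ge0 // => i _; rewrite sqr_ge0. Qed.

Lemma exists_min n (B : 'M[R]_n) : (0 < n)%N ->
  exists2 c : 'rV[R]_n, (c *m c^T) ord0 ord0 = 1 &
   forall z : 'rV[R]_n, (z *m z^T) ord0 ord0 = 1 ->
     (c *m B *m c^T) ord0 ord0 <= (z *m B *m z^T) ord0 ord0.
Proof.
move=> n0.
pose A := [set z : 'rV[R]_n | (z *m z^T) ord0 ord0 = 1].
have A0 : A !=set0.
  exists (delta_mx ord0 (Ordinal n0)); rewrite /A /= trmx_delta mul_delta_mx.
  by rewrite mxE !eqxx.
have cA : closed A.
  have -> : A = (fun z => (z *m 1%:M *m z^T) ord0 ord0) @^-1` [set x | x = 1].
    by apply/seteqP; split=> z /=; rewrite mulmx1.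
  by apply: preimage_closed; [move=> z _; exact: quad_cont | exact: closed_eq].
have bA : bounded_set A.
  exists 1; split; first exact: num_real.
  move=> M M1 z Az.
  rewrite /= [leLHS]/Num.norm /= mx_normrE; apply: bigmax_le => [|ij _].
    by apply: ltW; apply: lt_trans M1.
  apply: le_trans (ltW M1).
  case: ij => i j /=; rewrite (ord1 i).
  have : z ord0 j ^+ 2 <= 1.
    rewrite -Az mxE; under eq_bigr do rewrite mxE -expr2.
    exact: sq_le_sum.
  by rewrite -real_normK ?num_real // expr_le1.
have [c cA' cmin] := EVT_min_rV A0 (bounded_closed_compact bA cA)
   (continuous_subspaceT (@quad_cont _ B)).
exists c; first by move: cA'; rewrite inE.
by move=> z zA; apply: cmin; rewrite inE.
Qed.
End S.

End M2.
Import M2.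

Section S.
Variable R : realType.

Lemma tr11 (A : 'M[R]_1) : A^T ord0 ord0 = A ord0 ord0.
Proof. by rewrite mxE. Qed.

Lemma bil_sym m (B : 'M[R]_m) (x y : 'cV[R]_m) : B^T = B ->
  (x^T *m B *m y) ord0 ord0 = (y^T *m B *m x) ord0 ord0.
Proof.
by move=> sB; rewrite -tr11 !trmx_mul trmxK sB mulmxA.
Qed.

Lemma qf_lin m (B : 'M[R]_m) (x y : 'cV[R]_m) t : B^T = B ->
  qf B (x + t *: y) = qf B x + 2 * t * (y^T *m B *m x) ord0 ord0 + t ^+ 2 * qf B y.
Proof.
move=> sB; rewrite /qf; have -> : (x + t *: y)^T = x^T + t *: y^T by rewrite linearD linearZ.
rewrite !mulmxDl !mulmxDr.
rewrite -!scalemxAl -!scalemxAr !mxDE !mxZE (bil_sym x y sB).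
ring.
Qed.

Lemma qfB m (B1 B2 : 'M[R]_m) x : qf (B1 - B2) x = qf B1 x - qf B2 x.
Proof. by rewrite /qf mulmxBr mulmxBl mxBE. Qed.

Lemma qfD m (B1 B2 : 'M[R]_m) x : qf (B1 + B2) x = qf B1 x + qf B2 x.
Proof. by rewrite /qf mulmxDr mulmxDl mxDE. Qed.

Lemma qf_scalar m (mu : R) (x : 'cV[R]_m) : qf mu%:M x = mu * n2 x.
Proof. by rewrite /qf mul_mx_scalar -scalemxAl mxZE. Qed.

Lemma qf0 m (B : 'M[R]_m) : qf B 0 = 0.
Proof. by rewrite /qf mulmx0 mxE. Qed.

Lemma n2_eq0 m (x : 'cV[R]_m) : n2 x = 0 -> x = 0.
Proof.
rewrite n2E => h; apply/matrixP => i j; rewrite (ord1 j) [RHS]mxE.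
have := psumr_eq0P (fun i _ => sqr_ge0 (x i ord0)) h (isT : predT i).
by move=> h2; apply/eqP; rewrite -sqrf_eq0 h2.
Qed.

Lemma qfZr m (M : 'M[R]_m) (x : 'cV[R]_m) k :
  ((k *: x^T) *m M *m (k *: x^T)^T) ord0 ord0 = k ^+ 2 * qf M x.
Proof.
rewrite linearZ /= trmxK -!scalemxAl -scalemxAr !mxZE /qf expr2 mulrA //.
Qed.

Lemma psd_zero m (B : 'M[R]_m) v : B^T = B -> (forall x, 0 <= qf B x) ->
  qf B v = 0 -> B *m v = 0.
Proof.
move=> sB psd qv; set w := B *m v.
have ep : (w^T *m B *m v) ord0 ord0 = n2 w by rewrite /n2 -mulmxA.
set p := n2 w; set q := qf B w.
have p0 : 0 <= p := n2_ge0 w.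
have q0 : 0 <= q := psd w.
have := psd (v + (- (p / (q + 1))) *: w).
rewrite qf_lin // qv ep -/q add0r => h.
have : p ^+ 2 <= 0.
  have q1 : 0 < q + 1 by rewrite ltr_wpDl.
  have : 0 <= (q + 1) * (2 * - (p / (q + 1)) * p + (- (p / (q + 1))) ^+ 2 * q).
    by rewrite mulr_ge0 // ltW.
  have -> : (q + 1) * (2 * - (p / (q + 1)) * p + (- (p / (q + 1))) ^+ 2 * q)
     = - p ^+ 2 - p ^+ 2 / (q + 1).
    by field; rewrite gt_eqF.
  move=> h2; apply: le_trans (_ : p ^+ 2 + p ^+ 2 / (q + 1) <= 0).
    by rewrite lerDl divr_ge0 // ?sqr_ge0 // ltW.
  by rewrite -oppr_ge0 opprD.
rewrite le_eqVlt ltNge sqr_ge0 orbF sqrf_eq0 => /eqP /n2_eq0.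
by [].
Qed.

Lemma rayleigh n (W : 'M[R]_n) : (0 < n)%N -> W^T = W ->
  exists mu, eigenvalue W mu /\ forall x : 'cV[R]_n, mu * n2 x <= qf W x.
Proof.
move=> n0 sW; have [c c1 cmin] := exists_min W n0.
set mu := (c *m W *m c^T) ord0 ord0.
have hq : forall x, mu * n2 x <= qf W x.
  move=> x; have := n2_ge0 x; rewrite le_eqVlt => /orP [/eqP h | h].
    by rewrite -h mulr0 (n2_eq0 (esym h)) qf0.
  set s := Num.sqrt (n2 x).
  have s0 : 0 < s by rewrite sqrtr_gt0.
  have ss : s ^+ 2 = n2 x by rewrite sqr_sqrtr // ltW.
  have := cmin (s^-1 *: x^T).
  have q1 : forall M, qf M x = n2 x * ((s^-1 *: x^T) *m M *m (s^-1 *: x^T)^T) ord0 ord0.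
    by move=> M; rewrite qfZr mulrA -ss -exprMn mulfV ?gt_eqF // expr1n mul1r.
  have := q1 1%:M; rewrite mulmx1 -/(qf 1%:M x) qf_scalar mul1r.
  move=> h1; have -> : ((s^-1 *: x^T) *m (s^-1 *: x^T)^T) ord0 ord0 = 1.
    by apply: (mulfI (negbT (gt_eqF h))); rewrite mulr1 -h1.
  by move=> /(_ erefl) hm; rewrite (q1 W) mulrC ler_pM2l.
have hB : forall x, 0 <= qf (W - mu%:M) x.
  by move=> x; rewrite qfB qf_scalar subr_ge0.
have sB : (W - mu%:M)^T = W - mu%:M by rewrite linearB /= tr_scalar_mx sW.
have qv : qf (W - mu%:M) c^T = 0.
  by rewrite qfB qf_scalar /qf /n2 trmxK c1 mulr1 subrr.
have := psd_zero sB hB qv; rewrite mulmxBl mul_scalar_mx => /eqP; rewrite subr_eq0 => /eqP hv.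
exists mu; split => //; apply/eigenvalueP; exists c.
  by rewrite -[c]trmxK -sW -trmx_mul hv linearZ /= trmxK.
by apply/eqP => c0; move: c1; rewrite c0 mul0mx mxE => /eqP; rewrite eq_sym oner_eq0.
Qed.

Lemma min_eig_bound n (W : 'M[R]_n) lam : W^T = W -> is_min_eigenvalue W lam ->
  forall x, lam * n2 x <= qf W x.
Proof.
move=> sW [_ hmin] x; case: n W sW hmin x => [|n] W sW hmin x.
  by rewrite /qf /n2 !mxE !big_ord0 mulr0.
have [mu [emu hmu]] := rayleigh (isT : (0 < n.+1)%N) sW.
apply: le_trans (hmu x); rewrite ler_wpM2r ?n2_ge0 //; exact: hmin.
Qed.
End S.

Section S.
Variable R : realType.

Lemma final_ln n (dP m M : R) : 0 < m -> 0 < M -> m ^+ n <= dP <= M ^+ n ->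
  n%:R * ln (M^-1) <= ln (dP^-1) /\ ln (dP^-1) <= n%:R * ln (m^-1).
Proof.
move=> m0 M0 /andP [h1 h2].
have dP0 : 0 < dP by apply: lt_le_trans h1; rewrite exprn_gt0.
rewrite !lnV ?posrE // !mulrN !mulr_natl -!lnXn //; split; rewrite lerN2.
  by rewrite ler_ln ?posrE ?exprn_gt0.
by rewrite ler_ln ?posrE ?exprn_gt0.
Qed.

Lemma qf_diag n (d : 'rV[R]_n) x : qf (diag_mx d) x = \sum_j d ord0 j * x j ord0 ^+ 2.
Proof.
rewrite /qf mul_mx_diag mxE; apply: eq_bigr => j _; rewrite !mxE expr2; ring.
Qed.

Lemma pd_unit n (G : 'M[R]_n) : (forall x, x != 0 -> 0 < qf G x) -> G \in unitmx.
Proof.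
move=> h; rewrite unitmxE unitfE; apply/negP => /det0P [v v0 hv].
have hv0 : v^T != 0.
  by apply: contraNneq v0 => h0; rewrite -[v]trmxK h0 trmx0.
by have := h v^T hv0; rewrite /qf trmxK hv mul0mx mxE ltxx.
Qed.

End S.

Theorem theorem6 (R : realType) (n : nat) (A W C Sigma : 'M[R]_n)
  (sig : 'I_n -> R) (lamW : R) (l u : 'I_n) :
  pd_mx W ->
  is_min_eigenvalue W lamW ->
  is_diag_mx C ->
  (forall j, 0 < C j j) ->
  (forall j, 0 < sig j) ->
  let V := diag_mx (\row_j (sig j ^+ 2)) in
  psd_mx Sigma ->
  dare A W C V Sigma ->
  (forall j, C l l ^+ 2 / sig l ^+ 2 <= C j j ^+ 2 / sig j ^+ 2) ->
  (forall j, C j j ^+ 2 / sig j ^+ 2 <= C u u ^+ 2 / sig u ^+ 2) ->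
  n%:R * ln (sig u ^+ 2 / (C u u ^+ 2 + sig u ^+ 2 / lamW))
    <= ln (\det (post_cov Sigma C V))
  /\ ln (\det (post_cov Sigma C V)) <= n%:R * ln (sig l ^+ 2 / C l l ^+ 2).
Proof.
move=> [sW pdW] hmin Cd Cp sp V [sS psdS] hd hl hu.
have lamb := min_eig_bound sW hmin.
have lam0 : 0 < lamW.
  case: hmin => /eigenvalueP [v hv v0] _.
  have v0' : v^T != 0 by apply: contraNneq v0 => h0; rewrite -[v]trmxK h0 trmx0.
  have := pdW _ v0'; rewrite trmxK hv -scalemxAl mxZE.
  have : 0 < (v *m v^T) ord0 ord0.
    have := n2_ge0 v^T; rewrite /n2 trmxK le_eqVlt => /orP [/eqP h|//].
    by move: v0'; have := @n2_eq0 _ _ v^T; rewrite /n2 trmxK => /(_ (esym h)) ->; rewrite eqxx.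
  by move=> h; rewrite pmulr_lgt0.
have qS0 : forall x, 0 <= qf Sigma x := psdS.
have eS : Sigma = A *m post_cov Sigma C V *m A^T + W.
  by rewrite {1}hd /post_cov mulmxBr mulmxBl !mulmxA.
pose Vi : 'M[R]_n := diag_mx (\row_j (sig j ^+ 2)^-1).
have VVi : V *m Vi = 1%:M.
  rewrite /V /Vi mulmx_diag; apply/(@matrixP _ n n) => i j; rewrite !mxE.
  by rewrite mulfV // expf_neq0 // gt_eqF.
have Vu : V \in unitmx by case: (mulmx1_unit VVi).
have qVd : forall x, qf V x = \sum_j sig j ^+ 2 * x j ord0 ^+ 2.
  by move=> x; rewrite /V qf_diag; apply: eq_bigr => j _; rewrite mxE.
have qV0 : forall x, 0 <= qf V x.
  by move=> x; rewrite qVd sumr_ge0 // => j _; rewrite mulr_ge0 // sqr_ge0.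
have qV : forall x, x != 0 -> 0 < qf V x.
  move=> x x0; rewrite lt_def qV0 andbT; apply: contraNneq x0 => h.
  apply/eqP/(@matrixP _ n 1) => i j; rewrite (ord1 j) [RHS]mxE.
  have := psumr_eq0P (fun i _ => mulr_ge0 (sqr_ge0 (sig i)) (sqr_ge0 (x i ord0)))
    (etrans (esym (qVd x)) h) (isT : predT i).
  move=> h2; have /orP [] : (sig i ^+ 2 == 0) || (x i ord0 ^+ 2 == 0).
    by rewrite -mulf_eq0 h2.
    by rewrite sqrf_eq0 gt_eqF.
  by rewrite sqrf_eq0 => /eqP.
have qG : forall x, qf (C *m Sigma *m C^T + V) x = qf Sigma (C^T *m x) + qf V x.
  by move=> x; rewrite qfD /qf trmx_mul trmxK !mulmxA.
have Gu : (C *m Sigma *m C^T + V) \in unitmx.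
  by apply: pd_unit => x x0; rewrite qG; apply: ltr_wpDl (qS0 _) (qV _ x0).
have qSb : forall x, 0 <= qf (post_cov Sigma C V) x.
  move=> x; rewrite /post_cov.
  move: Gu; set G := C *m Sigma *m C^T + V => Gu.
  set y := C *m Sigma *m x; set w := invmx G *m y.
  have e1 : qf (Sigma - Sigma *m C^T *m invmx G *m C *m Sigma) x
      = qf Sigma x - (y^T *m w) ord0 ord0.
    by rewrite qfB; congr (_ - _); rewrite /qf /y /w !trmx_mul sS !mulmxA.
  have e2 : qf Sigma (x + (-1) *: (C^T *m w)) =
      qf Sigma x + 2 * (-1) * (w^T *m y) ord0 ord0 + (-1) ^+ 2 * (qf G w - qf V w).
    rewrite qf_lin //; congr (_ + _ * _ + _ * _).
      by rewrite /y trmx_mul trmxK !mulmxA.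
    by rewrite /G qG addrK.
  have e3 : qf G w = (w^T *m y) ord0 ord0 by rewrite /qf -mulmxA /w mulKVmx.
  have e4 : (y^T *m w) ord0 ord0 = (w^T *m y) ord0 ord0.
    by rewrite -tr11 trmx_mul trmxK.
  have := addr_ge0 (qS0 (x + (-1) *: (C^T *m w))) (qV0 w).
  rewrite e2 e3 e1 e4; lra.
have qSW : forall x, lamW * n2 x <= qf Sigma x.
  move=> x; have -> : qf Sigma x = qf (A *m post_cov Sigma C V *m A^T + W) x by rewrite -eS.
  rewrite qfD; apply: le_trans (lamb x) _; rewrite lerDr.
  have -> : qf (A *m post_cov Sigma C V *m A^T) x = qf (post_cov Sigma C V) (A^T *m x).
    by rewrite /qf trmx_mul trmxK !mulmxA.
  exact: qSb.
have n2_gt0 : forall x : 'cV[R]_n, x != 0 -> 0 < n2 x.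
  move=> x x0; rewrite lt_def n2_ge0 andbT; apply: contraNneq x0 => h.
  by rewrite (n2_eq0 h).
have Su : Sigma \in unitmx.
  apply: pd_unit => x x0; apply: lt_le_trans (qSW x).
  by rewrite mulr_gt0 // n2_gt0.
have sSi : (invmx Sigma)^T = invmx Sigma by rewrite trmx_inv sS.
have qSi : forall x, 0 <= qf (invmx Sigma) x /\ qf (invmx Sigma) x <= lamW^-1 * n2 x.
  move=> x; set y := invmx Sigma *m x.
  have ex : x = Sigma *m y by rewrite /y mulKVmx.
  have e1 : qf (invmx Sigma) x = qf Sigma y.
    by rewrite /qf -mulmxA -/y {1}ex trmx_mul sS.
  have e2 : (y^T *m 1%:M *m x) ord0 ord0 = qf (invmx Sigma) x.
    by rewrite e1 mulmx1 {1}ex /qf mulmxA.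
  have t1 : (1%:M : 'M[R]_n)^T = 1%:M by rewrite tr_scalar_mx.
  have := qf_lin x y (- lamW) t1.
  rewrite e2 !qf_scalar !mul1r => e3.
  have h0 := n2_ge0 (x + - lamW *: y).
  have h1 := qSW y; rewrite -e1 in h1.
  have h2 : lamW * (lamW * n2 y) <= lamW * qf (invmx Sigma) x by rewrite ler_pM2l.
  have h3 : 0 <= lamW * n2 y by rewrite mulr_ge0 ?n2_ge0 // ltW.
  split; first exact: le_trans h3 h1.
  rewrite -(ler_pM2l lam0) mulrA mulfV ?gt_eqF // mul1r.
  move: h0 h2; rewrite e3; nra.
have eC : C = diag_mx (\row_j C j j).
  apply/(@matrixP _ n n) => i j; rewrite !mxE.
  case: (eqVneq i j) => [->|ne]; first by rewrite mulr1n.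
  rewrite mulr0n; apply: (is_diag_mxP Cd).
  by apply: contra ne => /eqP h; apply/eqP/val_inj.
pose D : 'M[R]_n := diag_mx (\row_j (C j j ^+ 2 / sig j ^+ 2)).
have eD : C^T *m Vi *m C = D.
  rewrite eC tr_diag_mx /Vi !mulmx_diag /D; congr diag_mx.
  by apply/(@matrixP _ 1 n) => i j; rewrite !mxE mulrAC expr2.
have VVi' : Vi = invmx V by rewrite -[invmx V]mulmx1 -VVi mulmxA mulVmx // mul1mx.
have SbP : post_cov Sigma C V *m (C^T *m Vi *m C + invmx Sigma) = 1%:M.
  rewrite /post_cov.
  move: Gu; set G := C *m Sigma *m C^T + V => Gu.
  set K := Sigma *m C^T *m invmx G *m C.
  rewrite mulmxBl !mulmxDr mulmxV //.
  have -> : K *m Sigma *m invmx Sigma = K by rewrite -mulmxA mulmxV // mulmx1.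
  have -> : K *m Sigma *m (C^T *m Vi *m C) = Sigma *m C^T *m Vi *m C - K.
    have -> : K *m Sigma *m (C^T *m Vi *m C) =
       (Sigma *m C^T *m invmx G) *m (C *m Sigma *m C^T) *m (Vi *m C).
      by rewrite /K !mulmxA.
    have -> : C *m Sigma *m C^T = G - V by rewrite /G addrK.
    rewrite mulmxBr mulmxBl mulmxKV //.
    have -> : Sigma *m C^T *m invmx G *m V *m (Vi *m C) = K.
      by rewrite (mulmxA _ Vi) -(mulmxA _ V) VVi mulmx1.
    by rewrite !mulmxA.
  by rewrite !mulmxA subrK [X in X - _]addrC addrK.
rewrite eD in SbP.
set m := C l l ^+ 2 / sig l ^+ 2.
set M := C u u ^+ 2 / sig u ^+ 2 + lamW^-1.
have m0 : 0 < m by rewrite divr_gt0 // exprn_gt0.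
have M0 : 0 < M by rewrite ltr_wpDl ?invr_gt0 // divr_ge0 // exprn_ge0 // ltW.
have sP : (D + invmx Sigma)^T = D + invmx Sigma by rewrite linearD /= tr_diag_mx sSi.
have qD : forall x, qf D x = \sum_j (C j j ^+ 2 / sig j ^+ 2) * x j ord0 ^+ 2.
  by move=> x; rewrite qf_diag; apply: eq_bigr => j _; rewrite mxE.
have loP : forall x, m * n2 x <= qf (D + invmx Sigma) x.
  move=> x; rewrite qfD; apply: le_trans (_ : qf D x <= _); last first.
    by rewrite lerDl; case: (qSi x).
  rewrite qD n2E mulr_sumr; apply: ler_sum => j _.
  by rewrite ler_wpM2r // sqr_ge0.
have hiP : forall x, qf (D + invmx Sigma) x <= M * n2 x.
  move=> x; rewrite qfD /M mulrDl; apply: lerD; last by case: (qSi x).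
  rewrite qD n2E mulr_sumr; apply: ler_sum => j _.
  by rewrite ler_wpM2r // sqr_ge0.
have hdet := det_bounds m0 sP loP hiP.
have dP0 : \det (D + invmx Sigma) != 0.
  case/andP: hdet => h _; rewrite gt_eqF //; apply: lt_le_trans h.
  by rewrite exprn_gt0.
have eSb : \det (post_cov Sigma C V) = (\det (D + invmx Sigma))^-1.
  apply: (mulIf dP0); rewrite mulVf // -det_mulmx SbP det1 //.
have [f1 f2] := final_ln m0 M0 hdet.
rewrite eSb; split.
  have -> : sig u ^+ 2 / (C u u ^+ 2 + sig u ^+ 2 / lamW) = M^-1.
    rewrite /M; field.
    rewrite !gt_eqF // ltr_wpDr ?sqr_ge0 // mulr_gt0 // exprn_gt0 //.
  exact: f1.
by rewrite -[sig l ^+ 2 / C l l ^+ 2]invf_div.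
Qed.
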